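(* Let $\boldsymbol{m}=(m_1,m_2)\in\mathbb{N}^2$ and $g=\gcd(m_1,m_2)$. For every $l\in\{0,\dots,4m_1m_2/g-1\}$ and $\rho\in\{0,\dots,2g-1\}$ there exist $\boldsymbol{i}\in\mathrm{I}^{(\boldsymbol{m})}$ and $u,v\in\{-1,1\}$ with \[ i_1\equiv u\big(vl+(1-v)m_1\big)\pmod{4m_1},\qquad i_2\equiv l-2\rho-(1-v)m_2\pmod{4m_2}. \] The index $\boldsymbol{i}$ is uniquely determined by $(l,\rho)$ through these congruences, and the resulting map $(l,\rho)\mapsto\boldsymbol{i}(l,\rho)$ from $\{0,\dots,4m_1m_2/g-1\}\times\{0,\dots,2g-1\}$ to $\mathrm{I}^{(\boldsymbol{m})}$ is surjective. Moreover $\boldsymbol{i}(l,\rho)\in\mathrm{I}^{(\boldsymbol{m})}_0$ if and only if $l$ is even, and $\boldsymbol{i}(l,\rho)\in\mathrm{I}^{(\boldsymbol{m})}_1$ if and only if $l$ is odd. With the additional convention that $u=1$ if $l\equiv0\pmod{4m_1}$ and $u=-1$ if $l\equiv 2m_1\pmod{4m_1}$, the numbers $u,v$ are uniquely determined by the two congruences, and for every $\boldsymbol{i}\in\mathrm{I}^{(\boldsymbol{m})}$ \[\#\{(l,\rho):\ \boldsymbol{i}(l,\rho)=\boldsymbol{i}\}=\begin{cases}4,& 0<i_1\le m_1,\\ 2,& i_1=0.\end{cases}\]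
   Context: Nodal index set: $\mathrm{I}^{(\boldsymbol{m})}=\{(i_1,i_2)\in\mathbb{Z}^2:\ 0\le i_1\le m_1,\ -2m_2<i_2\le 2m_2,\ i_2\le0\text{ if }i_1=m_1,\ i_1+i_2\text{ even}\}$, with subsets $\mathrm{I}^{(\boldsymbol{m})}_0=\{\boldsymbol{i}\in\mathrm{I}^{(\boldsymbol{m})}: i_1,i_2\text{ even}\}$ and $\mathrm{I}^{(\boldsymbol{m})}_1=\{\boldsymbol{i}\in\mathrm{I}^{(\boldsymbol{m})}: i_1,i_2\text{ odd}\}$. *)

(* Defs.v *)
From HB Require Import structures.
From mathcomp Require Import all_boot all_order all_algebra.
Set Implicit Arguments. Unset Strict Implicit. Unset Printing Implicit Defensive.
Import Order.TTheory GRing.Theory Num.Theory.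
Local Open Scope ring_scope.

Definition inI (m1 m2 : nat) (i : int * int) : bool :=
  [&& 0 <= i.1, i.1 <= m1%:Z, - (2 * m2%:Z) < i.2, i.2 <= 2 * m2%:Z,
      (i.1 == m1%:Z) ==> (i.2 <= 0) & (2 %| i.1 + i.2)%Z].

Definition inI0 (m1 m2 : nat) (i : int * int) : bool :=
  [&& inI m1 m2 i, (2 %| i.1)%Z & (2 %| i.2)%Z].
Definition inI1 (m1 m2 : nat) (i : int * int) : bool :=
  [&& inI m1 m2 i, ~~ (2 %| i.1)%Z & ~~ (2 %| i.2)%Z].

Definition cong (m1 m2 l rho : nat) (i : int * int) (u v : int) : bool :=
  ((i.1 == u * (v * l%:Z + (1 - v) * m1%:Z) %[mod (4 * m1)%:Z])%Z) &&
  ((i.2 == l%:Z - 2 * rho%:Z - (1 - v) * m2%:Z %[mod (4 * m2)%:Z])%Z).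

Definition signs : seq int := [:: 1; -1].

Definition corr (m1 m2 l rho : nat) (i : int * int) : bool :=
  inI m1 m2 i &&
  has (fun u => has (fun v => cong m1 m2 l rho i u v) signs) signs.

Definition uconv (m1 l : nat) (u : int) : Prop :=
  ((l %% (4 * m1) == 0)%N -> u = 1) /\ ((l %% (4 * m1) == 2 * m1)%N -> u = -1).

(* Main.v *)
Require Import Defs.
From HB Require Import structures.
From mathcomp Require Import all_boot all_order all_algebra.
From mathcomp Require Import zify.
Import Order.TTheory GRing.Theory Num.Theory.
Local Open Scope ring_scope.

Lemma signsP (u : int) : u \in signs -> u = 1 \/ u = -1.
Proof. by rewrite /signs !inE => /orP[/eqP->|/eqP->]; [left|right]. Qed.

Lemma congP m1 m2 l rho a b u v : cong m1 m2 l rho (a,b) u v <->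
  (exists k1, a - u*(v*Posz l + (1-v)*Posz m1) = k1 * (4 * Posz m1)) /\
  (exists k2, b - (Posz l - 2*Posz rho - (1-v)*Posz m2) = k2 * (4* Posz m2)).
Proof.
rewrite /cong !eqz_mod_dvd /=; split.
  by case/andP=> /dvdzP[k1 h1] /dvdzP[k2 h2]; split; [exists k1|exists k2]; lia.
case=> [[k1 h1] [k2 h2]]; apply/andP; split; apply/dvdzP; [exists k1|exists k2]; lia.
Qed.

Lemma inIP m1 m2 a b : inI m1 m2 (a,b) <->
  [/\ 0 <= a, a <= Posz m1, - (2 * Posz m2) < b /\ b <= 2 * Posz m2,
      (a = Posz m1 -> b <= 0) & (exists k, a + b = k * 2)].
Proof.
rewrite /inI /=; split.
  case/andP=> h1 /andP[h2 /andP[h3 /andP[h4 /andP[/implyP h5 /dvdzP h6]]]]; split=> //.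
  by move=> e; apply: h5; rewrite e.
case=> h1 h2 [h3 h4] h5 [k h6]; rewrite h1 h2 h3 h4 /=; apply/andP; split.
  by apply/implyP=> /eqP/h5.
by apply/dvdzP; exists k.
Qed.

Set Implicit Arguments. Unset Strict Implicit.

Ltac split3 e :=
  assert (e <= -1 \/ e = 0 \/ 1 <= e)%R as [?|[?|?]] by lia.
Ltac solve2 k k' := first [ split3 (k+k'); nia | split3 (k-k'); nia ].

Lemma U1 (m1 : nat) (a a' l s s' k k' : int) : (0<m1)%N ->
  0 <= a -> a <= Posz m1 -> 0 <= a' -> a' <= Posz m1 ->
  (s = 1 \/ s = -1) -> (s' = 1 \/ s' = -1) ->
  a - s * l = k*(2*Posz m1) -> a' - s' * l = k'*(2*Posz m1) -> a = a'.
Proof.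
move=> hm ha1 ha2 ha3 ha4 [->|->] [->|->] h1 h2.
- split3 (k-k'); nia.
- have hk : (k+k' <= -1 \/ k+k' = 0 \/ k+k' = 1 \/ 2 <= k+k')%R by lia.
  case: hk => [?|[?|[?|?]]]; nia.
- have hk : (k+k' <= -1 \/ k+k' = 0 \/ k+k' = 1 \/ 2 <= k+k')%R by lia.
  case: hk => [?|[?|[?|?]]]; nia.
- split3 (k-k'); nia.
Qed.

Lemma C1mod2 (m1 l : nat) (a u v k : int) : (u = 1 \/ u = -1) -> (v = 1 \/ v = -1) ->
  a - u*(v*Posz l + (1-v)*Posz m1) = k * (4 * Posz m1) ->
  exists s K, (s = 1 \/ s = -1) /\ a - s * Posz l = K * (2 * Posz m1).
Proof.
case=> -> [] -> h.
- by exists 1, (2*k); split; [left|lia].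
- by exists (-1), (2*k+1); split; [right|lia].
- by exists (-1), (2*k); split; [right|lia].
- by exists 1, (2*k-1); split; [left|lia].
Qed.

Lemma AM1 (m1 l : nat) (a u u' k k' : int) : (0 < m1)%N -> 0 <= a -> a <= Posz m1 ->
  (u = 1 \/ u = -1) -> (u' = 1 \/ u' = -1) ->
  a - u*(1*Posz l + (1-1)*Posz m1) = k * (4 * Posz m1) ->
  a - u'*((-1)*Posz l + (1-(-1))*Posz m1) = k' * (4 * Posz m1) -> a = Posz m1.
Proof.
move=> hm ha1 ha2 [->|->] [->|->] h1 h2; solve2 k k'.
Qed.


Lemma uniq_i (m1 m2 l rho : nat) (a b a' b' u v u' v' : int) : (0 < m1)%N -> (0 < m2)%N ->
  inI m1 m2 (a,b) -> inI m1 m2 (a',b') -> u \in signs -> v \in signs -> u' \in signs -> v' \in signs ->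
  cong m1 m2 l rho (a,b) u v -> cong m1 m2 l rho (a',b') u' v' -> (a,b) = (a',b').
Proof.
move=> hm1 hm2 /inIP[ha1 ha2 [hb1 hb2] h5 _] /inIP[ha1' ha2' [hb1' hb2'] h5' _].
move=> /signsP hu /signsP hv /signsP hu' /signsP hv'.
move=> /congP[[k1 h1] [k2 h2]] /congP[[k1' h1'] [k2' h2']].
have [s [K [hs e1]]] := C1mod2 hu hv h1.
have [s' [K' [hs' e1']]] := C1mod2 hu' hv' h1'.
have ea := U1 hm1 ha1 ha2 ha1' ha2' hs hs' e1 e1'. subst a'.
suff -> : b = b' by [].
case: hv h1 h2 => -> h1 h2; case: hv' h1' h2' => -> h1' h2'.
- split3 (k2-k2'); nia.
- have am := AM1 hm1 ha1 ha2 hu hu' h1 h1'.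
  have := h5 am; have := h5' am; move=> ? ?. split3 (k2-k2'); nia.
- have am := AM1 hm1 ha1 ha2 hu' hu h1' h1.
  have := h5 am; have := h5' am; move=> ? ?. split3 (k2-k2'); nia.
- split3 (k2-k2'); nia.
Qed.

Lemma diffV (m1 m2 l rho : nat) (a b u v u' v' : int) : (0 < m2)%N ->
  v \in signs -> v' \in signs -> v != v' ->
  cong m1 m2 l rho (a,b) u v -> cong m1 m2 l rho (a,b) u' v' -> False.
Proof.
move=> hm2 /signsP hv /signsP hv' hne /congP[_ [k2 h2]] /congP[_ [k2' h2']].
case: hv hne h2 => -> hne h2; case: hv' hne h2' => -> hne h2' //; split3 (k2-k2'); nia.
Qed.

Lemma diffU (m1 m2 l rho : nat) (a b u v : int) : (0 < m1)%N -> 0 <= a -> a <= Posz m1 ->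
  u \in signs -> v \in signs ->
  cong m1 m2 l rho (a,b) u v -> cong m1 m2 l rho (a,b) (-u) v -> a = 0.
Proof.
move=> hm1 ha1 ha2 /signsP hu /signsP hv /congP[[k1 h1] _] /congP[[k1' h1'] _].
case: hu h1 h1' => -> h1 h1'; case: hv h1 h1' => -> h1 h1'; split3 (k1+k1'); nia.
Qed.


Lemma modl (m1 l r : nat) (K : int) : (0<m1)%N -> (r < 4* m1)%N ->
  Posz l = Posz r + K * (4 * Posz m1) -> (l %% (4* m1))%N = r.
Proof.
move=> hm hr; case: K => k e.
  have -> : l = (k * (4* m1) + r)%N by lia.
  by rewrite modnMDl modn_small.
exfalso; rewrite NegzE in e; nia.
Qed.

Lemma uv_uniq (m1 m2 l rho : nat) (a b u v u' v' : int) : (0 < m1)%N -> (0 < m2)%N ->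
  inI m1 m2 (a,b) -> u \in signs -> v \in signs -> u' \in signs -> v' \in signs ->
  cong m1 m2 l rho (a,b) u v -> uconv m1 l u ->
  cong m1 m2 l rho (a,b) u' v' -> uconv m1 l u' -> u = u' /\ v = v'.
Proof.
move=> hm1 hm2 /inIP[ha1 ha2 _ _ _] hu hv hu' hv' c [cu1 cu2] c' [cu1' cu2'].
have ev : v = v'.
  case: (v =P v') => // /eqP hne; exfalso; exact: diffV hm2 hv hv' hne c c'.
subst v'; split => //.
case: (u =P u') => // hne; exfalso.
have hu2 : u' = - u by case/signsP: hu hne => ->; case/signsP: hu' => ->.
rewrite hu2 in c' cu1' cu2'.
have a0 := diffU hm1 ha1 ha2 hu hv c c'. subst a.
move/congP: c => [[k1 h1] _].
have h4 : (0 < 4 * m1)%N by lia.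
case/signsP: hu h1 cu1 cu2 cu1' cu2' => -> h1 cu1 cu2 cu1' cu2';
case/signsP: hv h1 => -> h1.
- have := @modl m1 l 0 (- k1) hm1 h4 ltac:(lia). move/eqP => /cu1'. lia.
- have := @modl m1 l (2* m1) k1 hm1 ltac:(lia) ltac:(lia). move/eqP => /cu2. lia.
- have := @modl m1 l 0 k1 hm1 h4 ltac:(lia). move/eqP => /cu1. lia.
- have := @modl m1 l (2* m1) (- k1) hm1 ltac:(lia) ltac:(lia). move/eqP => /cu2'. lia.
Qed.


Lemma ExA (m1 l : nat) : (0 < m1)%N -> exists a u v k K,
  [/\ 0 <= a /\ a <= Posz m1, u \in signs, v \in signs,
      a - u*(v*Posz l + (1-v)*Posz m1) = k * (4 * Posz m1) & a - Posz l = K * 2].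
Proof.
move=> hm.
have hl := divn_eq l (2 * m1). have hr : (l %% (2 * m1) < 2 * m1)%N by rewrite ltn_pmod // muln_gt0.
move: (l %/ (2 * m1))%N (l %% (2 * m1))%N hl hr => q r hl hr.
rewrite -(odd_double_half q) -mul2n in hl.
move: (odd q) (q./2) hl => [] q' hl; have [hrm|hrm] := leqP r m1.
- exists (Posz r), (-1), (-1), (- Posz q'), (- ((2 * Posz q' + 1) * Posz m1)).
  split; rewrite ?inE //; lia.
- exists (2 * Posz m1 - Posz r), (-1), 1, (Posz q' + 1), (Posz m1 - Posz r - (2 * Posz q' + 1) * Posz m1).
  split; rewrite ?inE //; lia.
- exists (Posz r), 1, 1, (- Posz q'), (- (2 * Posz q' * Posz m1)).
  split; rewrite ?inE //; lia.
- exists (2 * Posz m1 - Posz r), 1, (-1), (Posz q'), (Posz m1 - Posz r - 2 * Posz q' * Posz m1).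
  split; rewrite ?inE //; lia.
Qed.

Lemma ExB (m1 m2 l rho : nat) (a u v k K : int) : (0 < m1)%N -> (0 < m2)%N ->
  0 <= a -> a <= Posz m1 -> u \in signs -> v \in signs ->
  a - u*(v*Posz l + (1-v)*Posz m1) = k * (4 * Posz m1) -> a - Posz l = K * 2 ->
  exists b u' v', [/\ inI m1 m2 (a,b), u' \in signs, v' \in signs & cong m1 m2 l rho (a,b) u' v'].
Proof.
move=> hm1 hm2 ha1 ha2 hu hv h1 hp.
have hB : (4 * Posz m2) != 0 by lia.
have hBp : 0 < (4 * Posz m2) by lia.
set Y := Posz l - 2 * Posz rho - (1 - v) * Posz m2 - 1 + 2 * Posz m2.
have := divz_eq Y (4 * Posz m2); have := modz_ge0 Y hB; have := ltz_pmod Y hBp.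
move: (Y %/ (4 * Posz m2))%Z (Y %% (4 * Posz m2))%Z => q r r1 r0 ey.
rewrite /Y in ey; clear Y.
case/signsP: hu h1 => -> h1; case/signsP: hv h1 ey => -> h1 ey;
have [/andP[/eqP am hb0]|hsw] := boolP ((a == Posz m1) && (0 < r - 2 * Posz m2 + 1)).
- exists (r - 2 * Posz m2 + 1 - 2 * Posz m2), 1, (-1); split; rewrite ?inE //.
  + apply/inIP; split; [lia|lia|lia|move=> _; lia|exists (K + Posz l - Posz rho - Posz m2 - 2 * q * Posz m2); lia].
  + apply/congP; split; [exists (- k); lia|exists (- q); lia].
- exists (r - 2 * Posz m2 + 1), 1, 1; split; rewrite ?inE //.
  + apply/inIP; split; [lia|lia|lia|move=> am; move: hsw; rewrite am eqxx /=; lia|exists (K + Posz l - Posz rho - 2 * q * Posz m2); lia].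
  + apply/congP; split; [exists k; lia|exists (- q); lia].
- exists (r - 2 * Posz m2 + 1 - 2 * Posz m2), 1, 1; split; rewrite ?inE //.
  + apply/inIP; split; [lia|lia|lia|move=> _; lia|exists (K + Posz l - Posz rho - 2 * Posz m2 - 2 * q * Posz m2); lia].
  + apply/congP; split; [exists (- k); lia|exists (- q - 1); lia].
- exists (r - 2 * Posz m2 + 1), 1, (-1); split; rewrite ?inE //.
  + apply/inIP; split; [lia|lia|lia|move=> am; move: hsw; rewrite am eqxx /=; lia|exists (K + Posz l - Posz rho - Posz m2 - 2 * q * Posz m2); lia].
  + apply/congP; split; [exists k; lia|exists (- q); lia].
- exists (r - 2 * Posz m2 + 1 - 2 * Posz m2), (-1), (-1); split; rewrite ?inE //.
  + apply/inIP; split; [lia|lia|lia|move=> _; lia|exists (K + Posz l - Posz rho - Posz m2 - 2 * q * Posz m2); lia].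
  + apply/congP; split; [exists (1 - k); lia|exists (- q); lia].
- exists (r - 2 * Posz m2 + 1), (-1), 1; split; rewrite ?inE //.
  + apply/inIP; split; [lia|lia|lia|move=> am; move: hsw; rewrite am eqxx /=; lia|exists (K + Posz l - Posz rho - 2 * q * Posz m2); lia].
  + apply/congP; split; [exists k; lia|exists (- q); lia].
- exists (r - 2 * Posz m2 + 1 - 2 * Posz m2), (-1), 1; split; rewrite ?inE //.
  + apply/inIP; split; [lia|lia|lia|move=> _; lia|exists (K + Posz l - Posz rho - 2 * Posz m2 - 2 * q * Posz m2); lia].
  + apply/congP; split; [exists (1 - k); lia|exists (- q - 1); lia].
- exists (r - 2 * Posz m2 + 1), (-1), (-1); split; rewrite ?inE //.
  + apply/inIP; split; [lia|lia|lia|move=> am; move: hsw; rewrite am eqxx /=; lia|exists (K + Posz l - Posz rho - Posz m2 - 2 * q * Posz m2); lia].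
  + apply/congP; split; [exists k; lia|exists (- q); lia].
Qed.


Lemma natz_of (z : int) : 0 <= z -> exists n : nat, z = Posz n.
Proof. by case: z => n // _; exists n. Qed.

Lemma CRT (m1 m2 : nat) (T1 T2 E : int) : (0 < m1)%N -> (0 < m2)%N -> T1 - T2 = 2 * E ->
  exists l rho : nat, [/\ (l < 4 * m1 * m2 %/ gcdn m1 m2)%N, (rho < 2 * gcdn m1 m2)%N,
    (exists k1, Posz l - T1 = k1 * (4 * Posz m1)) &
    (exists k2, Posz l - 2 * Posz rho - T2 = k2 * (4 * Posz m2))].
Proof.
move=> hm1 hm2 hE.
have hg : (0 < gcdn m1 m2)%N by rewrite gcdn_gt0 hm1.
have [x [y hxy]] := Bezoutz (Posz (4 * m1)) (Posz (4 * m2)).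
have eg : gcdz (Posz (4 * m1)) (Posz (4 * m2)) = Posz (4 * gcdn m1 m2) by rewrite /gcdz /= muln_gcdr.
rewrite eg in hxy.
have e1 := esym (divnK (dvdn_gcdl m1 m2)); have e2 := esym (divnK (dvdn_gcdr m1 m2)).
move: e1 e2; move: (m1 %/ gcdn m1 m2)%N (m2 %/ gcdn m1 m2)%N => n1 n2 e1 e2.
move: hg hxy e1 e2; move: (gcdn m1 m2) => g hg hxy e1 e2.
subst m1 m2.
have eL : (4 * (n1 * g) * (n2 * g) %/ g = 4 * n1 * n2 * g)%N.
  by rewrite (_ : 4 * (n1 * g) * (n2 * g) = (4 * n1 * n2 * g) * g)%N ?mulnK //; lia.
rewrite eL.
have h2g : (2 * Posz g) != 0 by lia.
have h2gp : 0 < (2 * Posz g) by lia.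
have := divz_eq E (2 * Posz g); have := modz_ge0 E h2g; have := ltz_pmod E h2gp.
move: (E %/ (2 * Posz g))%Z (E %% (2 * Posz g))%Z => E' r r1 r0 eE.
have hLp : 0 < Posz (4 * n1 * n2 * g) by nia.
have hL0 : Posz (4 * n1 * n2 * g) != 0 by lia.
set l0 := T1 - E' * x * (4 * Posz n1 * Posz g).
have := divz_eq l0 (Posz (4 * n1 * n2 * g)); have := modz_ge0 l0 hL0; have := ltz_pmod l0 hLp.
move: (l0 %/ _)%Z (l0 %% _)%Z => c l1 l11 l10 el.
rewrite /l0 in el.
have [nl enl] := natz_of l10; have [nr enr] := natz_of r0.
have hxy2 := congr1 (fun z => E' * z) hxy.
exists nl, nr; split.
- lia.
- lia.
- exists (- E' * x - c * Posz n2); nia.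
- exists (E' * y - c * Posz n1); nia.
Qed.


Lemma ExLR (m1 m2 : nat) (a b u v : int) : (0 < m1)%N -> (0 < m2)%N ->
  inI m1 m2 (a,b) -> u \in signs -> v \in signs ->
  exists l rho : nat, [/\ (l < 4 * m1 * m2 %/ gcdn m1 m2)%N, (rho < 2 * gcdn m1 m2)%N &
    cong m1 m2 l rho (a,b) u v].
Proof.
move=> hm1 hm2 /inIP[_ _ _ _ [kp hp]] /signsP hu /signsP hv.
case: hu => ->; case: hv => ->.
- have [l [rho [h1 h2 [k1 e1] [k2 e2]]]] := CRT (T1 := a) (T2 := b) (E := kp - b) hm1 hm2 ltac:(lia).
  exists l, rho; split=> //; apply/congP; split; [exists (- k1)|exists (- k2)]; lia.
- have [l [rho [h1 h2 [k1 e1] [k2 e2]]]] := CRT (T1 := - a + 2 * Posz m1) (T2 := b + 2 * Posz m2)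
     (E := - kp + Posz m1 - Posz m2) hm1 hm2 ltac:(lia).
  exists l, rho; split=> //; apply/congP; split; [exists k1|exists (- k2)]; lia.
- have [l [rho [h1 h2 [k1 e1] [k2 e2]]]] := CRT (T1 := - a) (T2 := b) (E := - kp) hm1 hm2 ltac:(lia).
  exists l, rho; split=> //; apply/congP; split; [exists k1|exists (- k2)]; lia.
- have [l [rho [h1 h2 [k1 e1] [k2 e2]]]] := CRT (T1 := a + 2 * Posz m1) (T2 := b + 2 * Posz m2)
     (E := kp - b + Posz m1 - Posz m2) hm1 hm2 ltac:(lia).
  exists l, rho; split=> //; apply/congP; split; [exists (- k1)|exists (- k2)]; lia.
Qed.

Lemma KEYg (m1 m2 l l' rho rho' : nat) (K1 K2 : int) : (0 < m1)%N -> (0 < m2)%N ->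
  (l < 4 * m1 * m2 %/ gcdn m1 m2)%N -> (l' < 4 * m1 * m2 %/ gcdn m1 m2)%N ->
  (rho < 2 * gcdn m1 m2)%N -> (rho' < 2 * gcdn m1 m2)%N ->
  Posz l - Posz l' = K1 * (4 * Posz m1) ->
  (Posz l - 2 * Posz rho) - (Posz l' - 2 * Posz rho') = K2 * (4 * Posz m2) ->
  l = l' /\ rho = rho'.
Proof.
move=> hm1 hm2 hl hl' hr hr' e1 e2.
have erho : rho = rho'.
  move: hr hr'; have hg : (0 < gcdn m1 m2)%N by rewrite gcdn_gt0 hm1.
  have f1 := esym (divnK (dvdn_gcdl m1 m2)); have f2 := esym (divnK (dvdn_gcdr m1 m2)).
  move: f1 f2; move: (m1 %/ gcdn m1 m2)%N (m2 %/ gcdn m1 m2)%N => n1 n2 f1 f2.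
  move: hg f1 f2; move: (gcdn m1 m2) => g hg f1 f2 hr hr'.
  rewrite f1 in e1; rewrite f2 in e2.
  split3 (K1 * Posz n1 - K2 * Posz n2); nia.
subst rho'; split => //.
have hd : (Posz (lcmn (4 * m1) (4 * m2)) %| Posz l - Posz l')%Z.
  rewrite dvdz_lcm; apply/andP; split; apply/dvdzP; [exists K1|exists K2]; lia.
have eL : lcmn (4 * m1) (4 * m2) = (4 * m1 * m2 %/ gcdn m1 m2)%N.
  by rewrite -muln_lcmr /lcmn muln_divA ?mulnA // dvdn_mulr // dvdn_gcdl.
rewrite eL in hd; move/dvdzP: hd => [c hc].
split3 c; nia.
Qed.

Lemma par_eq (x y K : int) : x - y = K * 2 -> (2 %| x)%Z = (2 %| y)%Z.
Proof.
move=> e; apply/dvdzP/dvdzP => -[q hq]; [exists (q - K)|exists (q + K)]; lia.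
Qed.

Lemma parity (m1 m2 l rho : nat) (a b u v : int) :
  inI m1 m2 (a,b) -> u \in signs -> v \in signs -> cong m1 m2 l rho (a,b) u v ->
  inI0 m1 m2 (a,b) = ~~ odd l /\ inI1 m1 m2 (a,b) = odd l.
Proof.
move=> hI /signsP hu /signsP hv /congP[[k1 h1] [k2 h2]].
have [K hK] : exists K, a - Posz l = K * 2.
  case: hu h1 => ->; case: hv => -> h1.
  - by exists (2 * k1 * Posz m1); lia.
  - by exists (2 * k1 * Posz m1 + Posz m1 - Posz l); lia.
  - by exists (2 * k1 * Posz m1 - Posz l); lia.
  - by exists (2 * k1 * Posz m1 - Posz m1); lia.
have [K' hK'] : exists K, b - Posz l = K * 2.
  case: hv h2 => -> h2.
  - by exists (2 * k2 * Posz m2 - Posz rho); lia.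
  - by exists (2 * k2 * Posz m2 - Posz rho - Posz m2); lia.
have el : (2 %| Posz l)%Z = ~~ odd l by rewrite dvdzE /= dvdn2.
rewrite /inI0 /inI1 hI /= (par_eq hK) (par_eq hK') el.
by case: (odd l).
Qed.

Lemma flipU (m1 m2 l rho : nat) (b u v : int) :
  cong m1 m2 l rho (0,b) u v -> cong m1 m2 l rho (0,b) (-u) v.
Proof.
move=> /congP[[k1 h1] h2]; apply/congP; split=> //; exists (- k1); lia.
Qed.


Lemma sameUV (m1 m2 l l' rho rho' : nat) (a b u v : int) : (0 < m1)%N -> (0 < m2)%N ->
  (l < 4 * m1 * m2 %/ gcdn m1 m2)%N -> (l' < 4 * m1 * m2 %/ gcdn m1 m2)%N ->
  (rho < 2 * gcdn m1 m2)%N -> (rho' < 2 * gcdn m1 m2)%N ->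
  u \in signs -> v \in signs ->
  cong m1 m2 l rho (a,b) u v -> cong m1 m2 l' rho' (a,b) u v -> l = l' /\ rho = rho'.
Proof.
move=> hm1 hm2 hl hl' hr hr' /signsP hu /signsP hv /congP[[k1 h1] [k2 h2]] /congP[[k1' h1'] [k2' h2']].
case: hu h1 h1' => -> h1 h1'; case: hv h1 h1' h2 h2' => -> h1 h1' h2 h2'.
- apply: (@KEYg m1 m2 l l' rho rho' (k1' - k1) (k2' - k2)) => //; lia.
- apply: (@KEYg m1 m2 l l' rho rho' (k1 - k1') (k2' - k2)) => //; lia.
- apply: (@KEYg m1 m2 l l' rho rho' (k1 - k1') (k2' - k2)) => //; lia.
- apply: (@KEYg m1 m2 l l' rho rho' (k1' - k1) (k2' - k2)) => //; lia.
Qed.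


Unset Implicit Arguments. Set Strict Implicit.

Theorem proposition9p1 (m1 m2 : nat) (hm1 : (0 < m1)%N) (hm2 : (0 < m2)%N) :
  let g := gcdn m1 m2 in
  let L := (4 * m1 * m2 %/ g)%N in
  [/\ (* existence *)
      (forall l rho : nat, (l < L)%N -> (rho < 2 * g)%N ->
         exists i : int * int, exists u : int, exists v : int,
           [/\ inI m1 m2 i, u \in signs, v \in signs & cong m1 m2 l rho i u v]),
      (* i is uniquely determined by (l, rho) *)
      (forall (l rho : nat) (i i' : int * int), (l < L)%N -> (rho < 2 * g)%N ->
         corr m1 m2 l rho i -> corr m1 m2 l rho i' -> i = i'),
      (* the map (l, rho) |-> i(l, rho) is surjective onto I^(m) *)
      (forall i : int * int, inI m1 m2 i ->
         exists l : nat, exists rho : nat,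
           [/\ (l < L)%N, (rho < 2 * g)%N & corr m1 m2 l rho i]),
      (* parity *)
      (forall (l rho : nat) (i : int * int), (l < L)%N -> (rho < 2 * g)%N ->
         corr m1 m2 l rho i ->
         (inI0 m1 m2 i = ~~ odd l) /\ (inI1 m1 m2 i = odd l)) &
    [/\
      (* with the convention on u, the signs u, v are unique *)
      (forall (l rho : nat) (i i' : int * int) (u v u' v' : int),
         (l < L)%N -> (rho < 2 * g)%N ->
         inI m1 m2 i -> u \in signs -> v \in signs -> cong m1 m2 l rho i u v ->
         uconv m1 l u ->
         inI m1 m2 i' -> u' \in signs -> v' \in signs -> cong m1 m2 l rho i' u' v' ->
         uconv m1 l u' ->
         u = u' /\ v = v') &
      (* fibre sizes *)
      (forall i : int * int, inI m1 m2 i ->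
         #|[set p : 'I_L * 'I_(2 * g) | corr m1 m2 p.1 p.2 i]|
           = (if i.1 == 0 then 2 else 4)%N)]].
Proof.
move=> g L.
have s1 : (1 : int) \in signs by rewrite inE eqxx.
have sm : (-1 : int) \in signs by rewrite !inE eqxx orbT.
split.
- move=> l rho hl hr.
  have [a [u [v [k [K [[ha1 ha2] hu hv h1 hp]]]]]] := @ExA m1 l hm1.
  have [b [u' [v' [hI hu' hv' hc]]]] := @ExB m1 m2 l rho a u v k K hm1 hm2 ha1 ha2 hu hv h1 hp.
  by exists (a,b), u', v'.
- move=> l rho [a b] [a' b'] hl hr /andP[hI /hasP[u hu /hasP[v hv hc]]]
    /andP[hI' /hasP[u' hu' /hasP[v' hv' hc']]].
  exact: (uniq_i hm1 hm2 hI hI' hu hv hu' hv' hc hc').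
- move=> [a b] hI.
  have [l [rho [h1 h2 hc]]] := ExLR hm1 hm2 hI s1 s1.
  exists l, rho; split => //; apply/andP; split => //.
  by apply/hasP; exists 1 => //; apply/hasP; exists 1.
- move=> l rho [a b] hl hr /andP[hI /hasP[u hu /hasP[v hv hc]]].
  exact: (parity hI hu hv hc).
split.
- move=> l rho [a b] [a' b'] u v u' v' hl hr hI hu hv hc cu hI' hu' hv' hc' cu'.
  have e := uniq_i hm1 hm2 hI hI' hu hv hu' hv' hc hc'.
  case: e hc' => <- <- hc'.
  exact: (uv_uniq hm1 hm2 hI hu hv hu' hv' hc cu hc' cu').
move=> [a b] hI.
have [l1 [r1 [hl1 hr1 c1]]] := ExLR hm1 hm2 hI s1 s1.
have [l2 [r2 [hl2 hr2 c2]]] := ExLR hm1 hm2 hI sm s1.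
have [l3 [r3 [hl3 hr3 c3]]] := ExLR hm1 hm2 hI s1 sm.
have [l4 [r4 [hl4 hr4 c4]]] := ExLR hm1 hm2 hI sm sm.
pose q1 : 'I_L * 'I_(2 * g) := (Ordinal hl1, Ordinal hr1).
pose q2 : 'I_L * 'I_(2 * g) := (Ordinal hl2, Ordinal hr2).
pose q3 : 'I_L * 'I_(2 * g) := (Ordinal hl3, Ordinal hr3).
pose q4 : 'I_L * 'I_(2 * g) := (Ordinal hl4, Ordinal hr4).
have eS : [set p : 'I_L * 'I_(2 * g) | corr m1 m2 p.1 p.2 (a,b)] = [set q1; q2; q3; q4].
  apply/setP => -[x y]; rewrite !inE /=; apply/idP/idP.
  - move=> /andP[_ /hasP[u hu /hasP[v hv hc]]].
    have hx := ltn_ord x; have hy := ltn_ord y.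
    case/signsP: (hu) hc => ->; case/signsP: (hv) => -> hc.
    + have [e1 e2] := sameUV hm1 hm2 hx hl1 hy hr1 s1 s1 hc c1.
      suff -> : (x, y) = q1 by rewrite eqxx.
      by rewrite /q1; congr pair; apply: val_inj.
    + have [e1 e2] := sameUV hm1 hm2 hx hl3 hy hr3 s1 sm hc c3.
      suff -> : (x, y) = q3 by rewrite eqxx ?orbT.
      by rewrite /q3; congr pair; apply: val_inj.
    + have [e1 e2] := sameUV hm1 hm2 hx hl2 hy hr2 sm s1 hc c2.
      suff -> : (x, y) = q2 by rewrite eqxx ?orbT.
      by rewrite /q2; congr pair; apply: val_inj.
    + have [e1 e2] := sameUV hm1 hm2 hx hl4 hy hr4 sm sm hc c4.
      suff -> : (x, y) = q4 by rewrite eqxx ?orbT.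
      by rewrite /q4; congr pair; apply: val_inj.
  - move=> /orP[/orP[/orP[/eqP [-> ->]|/eqP[-> ->]]|/eqP [-> ->]]|/eqP [-> ->]];
      apply/andP; split => //; apply/hasP.
    + by exists 1 => //; apply/hasP; exists 1.
    + by exists (-1) => //; apply/hasP; exists 1.
    + by exists 1 => //; apply/hasP; exists (-1).
    + by exists (-1) => //; apply/hasP; exists (-1).
rewrite eS /=.
have n13 : q1 != q3.
  apply/negP => /eqP [e1 e2]; subst l3 r3.
  exact: (diffV (u := 1) (u' := 1) hm2 s1 sm isT c1 c3).
have n14 : q1 != q4.
  apply/negP => /eqP [e1 e2]; subst l4 r4.
  exact: (diffV hm2 s1 sm isT c1 c4).
have n23 : q2 != q3.
  apply/negP => /eqP [e1 e2]; subst l3 r3.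
  exact: (diffV hm2 s1 sm isT c2 c3).
have n24 : q2 != q4.
  apply/negP => /eqP [e1 e2]; subst l4 r4.
  exact: (diffV hm2 s1 sm isT c2 c4).
move/inIP: (hI) => [ha1 ha2 _ _ _].
case: eqP => ha.
- subst a.
  have e12 : q1 = q2.
    have [e1 e2] := sameUV hm1 hm2 hl1 hl2 hr1 hr2 sm s1 (flipU c1) c2.
    by rewrite /q1 /q2; subst l2 r2; congr pair; apply: val_inj.
  have e34 : q3 = q4.
    have [e1 e2] := sameUV hm1 hm2 hl3 hl4 hr3 hr4 sm sm (flipU c3) c4.
    by rewrite /q3 /q4; subst l4 r4; congr pair; apply: val_inj.
  rewrite -e12 -e34 in n14 n23 n24 *.
  have -> : [set q1; q1; q3; q3] = [set q1; q3] by apply/setP => p; rewrite !inE; case: (p == q1); case: (p == q3).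
  by rewrite cards2 n14.
have n12 : q1 != q2.
  apply/negP => /eqP [e1 e2]; subst l2 r2.
  by apply: ha; exact: (diffU hm1 ha1 ha2 s1 s1 c1 c2).
have n34 : q3 != q4.
  apply/negP => /eqP [e1 e2]; subst l4 r4.
  by apply: ha; exact: (diffU hm1 ha1 ha2 s1 sm c3 c4).
have -> : [set q1; q2; q3; q4] = q1 |: (q2 |: (q3 |: [set q4])).
  by apply/setP => p; rewrite !inE; case: (p == q1); case: (p == q2); case: (p == q3).
rewrite !cardsU1 cards1 !inE (negbTE n12) (negbTE n13) (negbTE n14) (negbTE n23) (negbTE n24) (negbTE n34).
by [].
Qed.
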